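(* Let $\Delta=\Delta(f)$ be a positive integer and $\lambda=\lambda(f)>0$ a real number, both depending on a real parameter $f$, such that $f\le \Delta^2+1$ and, as $f\to\infty$, \[ \Delta\log(1+\lambda)\to\infty \quad\text{ and }\quad \frac{2(\Delta\log(1+\lambda))^2}{f\,W(\Delta\log(1+\lambda))}\to 0\,. \] Then there is a function $\delta(f)\to 0$ as $f\to\infty$ such that for every such $f$ and every graph $G$ of maximum degree $\Delta$ in which the neighbourhood of every vertex spans at most $\Delta^2/f$ edges, writing $\mathbf{I}$ for the random independent set from the hard-core model on $G$ at fugacity $\lambda$, \[ \frac{1}{|V(G)|}\mathbb{E}|\mathbf{I}| \ge (1+\delta(f))\frac{\lambda}{1+\lambda}\cdot\frac{W(\Delta\log(1+\lambda))}{\Delta\log(1+\lambda)}\,. \]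
   Context: $\log$ is the natural logarithm. $W:[-1/e,\infty)\to[-1,\infty)$ is the Lambert $W$ function, the inverse of $z\mapsto ze^z$. For a graph $G$ with set $\mathcal{I}(G)$ of independent sets (including the empty set) and $\lambda>0$, the hard-core model on $G$ at fugacity $\lambda$ is the probability distribution on $\mathcal{I}(G)$ with $\Pr(\mathbf{I}=I)=\lambda^{|I|}/Z_G(\lambda)$, where $Z_G(\lambda)=\sum_{I\in\mathcal{I}(G)}\lambda^{|I|}$. ''The neighbourhood of a vertex $v$ spans at most $m$ edges'' means the subgraph induced by $N(v)$ has at most $m$ edges. *)

(* Defs.v *)
From HB Require Import structures.
From mathcomp Require Import all_boot all_order all_algebra.
From mathcomp Require Import all_classical all_reals all_analysis.
Set Implicit Arguments. Unset Strict Implicit. Unset Printing Implicit Defensive.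
Import Order.TTheory GRing.Theory Num.Theory.
Local Open Scope classical_set_scope.
Local Open Scope ring_scope.

(* Lambert W on [-1/e, oo): the unique w >= -1 with w * e^w = x
   (defaulting to 0 outside the domain). *)
Definition lambertW (R : realType) (x : R) : R :=
  xget 0 [set w : R | -1 <= w /\ w * expR w = x].

Definition simple_graph (V : finType) (adj : rel V) : Prop :=
  (forall x y, adj x y = adj y x) /\ (forall x, ~~ adj x x).

Definition nbhd (V : finType) (adj : rel V) (v : V) : {set V} :=
  [set u | adj v u].

(* maximum degree (0 for the empty graph) *)
Definition max_degree (V : finType) (adj : rel V) : nat :=
  \max_(v : V) #|nbhd adj v|.

Definition nbhd_edges (R : realType) (V : finType) (adj : rel V) (v : V) : R :=
  (#|[set p : V * V | [&& adj v p.1, adj v p.2 & adj p.1 p.2]]|)%:R / 2.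

Definition independent (V : finType) (adj : rel V) (I : {set V}) : bool :=
  [forall x in I, forall y in I, ~~ adj x y].

Definition hc_Z (R : realType) (V : finType) (adj : rel V) (lam : R) : R :=
  \sum_(I : {set V} | independent adj I) lam ^+ #|I|.

Definition hc_expected_size (R : realType) (V : finType) (adj : rel V) (lam : R) : R :=
  (\sum_(I : {set V} | independent adj I) (#|I|)%:R * lam ^+ #|I|) / hc_Z adj lam.

(* Main.v *)
Require Import Defs.
From HB Require Import structures.
From mathcomp Require Import all_boot all_order all_algebra.
From mathcomp Require Import all_classical all_reals all_analysis.
From mathcomp Require Import ring lra.
Import Order.TTheory GRing.Theory Num.Theory.
Import numFieldNormedType.Exports.
Local Open Scope classical_set_scope.
Local Open Scope ring_scope.
Set Implicit Arguments. Unset Strict Implicit. Unset Printing Implicit Defensive.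
Lemma indepP (V : finType) (adj : rel V) (I : {set V}) :
  reflect (forall x y, x \in I -> y \in I -> ~~ adj x y) (independent adj I).
Proof.
apply: (iffP forall_inP) => H.
  by move=> x y xI yI; have /forall_inP := H x xI; apply.
by move=> x xI; apply/forall_inP => y yI; apply: H.
Qed.

Lemma indep_sub (V : finType) (adj : rel V) (I J : {set V}) :
  J \subset I -> independent adj I -> independent adj J.
Proof.
move=> /fintype.subsetP JI /indepP H; apply/indepP => x y xJ yJ; apply: H; exact: JI.
Qed.

Definition nofree (V : finType) (adj : rel V) (u : V) (W : {set V}) : bool :=
  ~~ [exists y in W, adj u y].

Lemma nofreeP (V : finType) (adj : rel V) (u : V) (W : {set V}) :
  reflect (forall y, y \in W -> ~~ adj u y) (nofree adj u W).
Proof.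
rewrite /nofree negb_exists_in; exact: forall_inP.
Qed.

Lemma indepU1 (V : finType) (adj : rel V) (v : V) (J : {set V}) :
  simple_graph adj ->
  independent adj (v |: J) = independent adj J && nofree adj v J.
Proof.
move=> [sym irr]; apply/idP/andP.
  move=> /indepP H; split.
    by apply/indepP => x y xJ yJ; apply: H; rewrite in_setU1 ?xJ ?yJ orbT.
  by apply/nofreeP => y yJ; apply: H; rewrite in_setU1 ?eqxx ?yJ ?orbT.
case=> /indepP HJ /nofreeP HD; apply/indepP => x y.
rewrite !in_setU1 => /orP[/eqP->|xJ] /orP[/eqP->|yJ].
- exact: irr.
- exact: HD.
- by rewrite sym; apply: HD.
- exact: HJ.
Qed.

Lemma indep_nofree (V : finType) (adj : rel V) (v : V) (I : {set V}) :
  independent adj I -> v \in I -> nofree adj v I.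
Proof.
by move=> /indepP H vI; apply/nofreeP => y yI; apply: H.
Qed.

Definition PP (R : realType) (V : finType) (adj : rel V) (lam : R) (v : V) : R :=
  \sum_(I : {set V} | independent adj I && (v \in I)) lam ^+ #|I|.
Definition QQ (R : realType) (V : finType) (adj : rel V) (lam : R) (v : V) : R :=
  \sum_(I : {set V} | independent adj I && nofree adj v I) lam ^+ #|I|.

Lemma PQ (R : realType) (V : finType) (adj : rel V) (lam : R) (v : V) :
  simple_graph adj -> (1 + lam) * PP adj lam v = lam * QQ adj lam v.
Proof.
move=> sg.
set Rs := \sum_(I : {set V} | independent adj I && nofree adj v I && (v \notin I)) lam ^+ #|I|.
have E1 : QQ adj lam v = PP adj lam v + Rs.
  rewrite /QQ (bigID (fun I : {set V} => v \in I)) /=; congr (_ + _).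
  apply: eq_bigl => I.
  case: (boolP (independent adj I)) => //= iI; case: (boolP (v \in I)) => vI;
    rewrite ?andbF ?andbT //.
  exact: indep_nofree.
have E2 : PP adj lam v = lam * Rs.
  rewrite /PP (reindex_onto (fun J => v |: J) (fun I => I :\ v)) /=; last first.
    by move=> I /andP[_ vI]; rewrite finset.setD1K.
  rewrite /Rs big_distrr /=; apply: eq_big => J.
    rewrite setU11 andbT.
    case vJ: (v \in J) => /=.
      rewrite andbF; apply/negbTE; rewrite negb_and; apply/orP; right.
      apply/negP => /eqP E; move: vJ; rewrite -E !inE eqxx //.
    have -> : (v |: J) :\ v = J by rewrite finset.setU1K // vJ.
    by rewrite eqxx andbT indepU1 // andbT.
  move=> /andP[_ /eqP E]; have vJ : v \notin J by rewrite -E !inE eqxx.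
  by rewrite cardsU1 vJ add1n exprS.
rewrite E1 E2; lra.
Qed.

Lemma decomp (R : realType) (V : finType) (N : {set V}) (F : {set V} -> R) :
  \sum_(J : {set V}) F J =
  \sum_(W : {set V} | W \subset ~: N) \sum_(S : {set V} | S \subset N) F (W :|: S).
Proof.
rewrite (partition_big (fun J => J :\: N) (fun W => W \subset ~: N)) /=; last first.
  by move=> J _; rewrite finset.setDE finset.subsetIr.
apply: eq_bigr => W WN.
rewrite (reindex_onto (fun S => W :|: S) (fun J => J :&: N)) /=; last first.
  by move=> J /eqP <-; rewrite finset.setUC finset.setID.
apply: eq_bigl => S.
have WN' : forall x, x \in W -> x \notin N.
  by move=> x xW; have := fintype.subsetP WN x xW; rewrite inE.
case: (boolP (S \subset N)) => SN.
  have SN' := fintype.subsetP SN.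
  have -> : (W :|: S) :\: N = W.
    apply/finset.setP => x; rewrite !inE.
    have h1 := WN' x; have h2 := SN' x.
    case: (x \in N) h1 h2; case: (x \in W); case: (x \in S) => //= h1 h2;
      first [by have := h1 isT | by have := h2 isT].
  have -> : (W :|: S) :&: N = S.
    apply/finset.setP => x; rewrite !inE.
    have h1 := WN' x; have h2 := SN' x.
    case: (x \in N) h1 h2; case: (x \in W); case: (x \in S) => //= h1 h2;
      first [by have := h1 isT | by have := h2 isT].
  by rewrite !eqxx.
apply/negbTE; rewrite negb_and; apply/orP; right.
apply/negP => /eqP E; move: SN; by rewrite -E finset.subsetIr.
Qed.

Lemma sum_subset_pow (R : realType) (V : finType) (U : {set V}) (x : R) :
  \sum_(S : {set V} | S \subset U) x ^+ #|S| = (1 + x) ^+ #|U|.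
Proof.
have := @bigA_distr R 0 1 *%R +%R V (fun i : V => if i \in U then x else 0) (fun _ => 1).
move=> H.
have L : \prod_(i : V) ((if i \in U then x else 0) + 1) = (1 + x) ^+ #|U|.
  rewrite (bigID (fun i => i \in U)) /=.
  rewrite [X in _ * X]big1; last by move=> i /negbTE ->; rewrite add0r.
  rewrite mulr1 -prodr_const; apply: eq_bigr => i ->; by rewrite addrC.
rewrite -L H /= [RHS](bigID (fun S : {set V} => S \subset U)) /=.
rewrite [X in _ = _ + X]big1 ?addr0; last first.
  move=> S SU.
  have [i /andP [iS iU]] : exists i, (i \in S) && (i \notin U).
    apply/existsP; move: SU; apply: contraNT; rewrite negb_exists => /forallP H1.
    apply/fintype.subsetP => i iS; have := H1 i; by rewrite iS /= negbK.
  rewrite (bigD1 i) //= iS (negbTE iU) mul0r //.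
apply: eq_bigr => S SU.
rewrite (bigID (fun i => i \in S)) /=.
rewrite [X in _ * X]big1; last by move=> i /negbTE ->.
rewrite mulr1 -prodr_const; apply: eq_bigr => i iS.
by rewrite iS (fintype.subsetP SU i iS).
Qed.

Lemma WS_facts (V : finType) (N W S : {set V}) :
  W \subset ~: N -> S \subset N ->
  [/\ (W :|: S) :\: N = W, (W :|: S) :&: N = S & #|W :|: S| = (#|W| + #|S|)%N].
Proof.
move=> WN SN.
have WN' : forall x, x \in W -> x \notin N.
  by move=> x xW; have := fintype.subsetP WN x xW; rewrite inE.
have SN' := fintype.subsetP SN.
have E0 : W :&: S = finset.set0.
  apply/finset.setP => x; rewrite !inE.
  have h1 := WN' x; have h2 := SN' x.
  case: (x \in N) h1 h2; case: (x \in W); case: (x \in S) => //= h1 h2;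
    first [by have := h1 isT | by have := h2 isT].
split.
- apply/finset.setP => x; rewrite !inE.
  have h1 := WN' x; have h2 := SN' x.
  case: (x \in N) h1 h2; case: (x \in W); case: (x \in S) => //= h1 h2;
    first [by have := h1 isT | by have := h2 isT].
- apply/finset.setP => x; rewrite !inE.
  have h1 := WN' x; have h2 := SN' x.
  case: (x \in N) h1 h2; case: (x \in W); case: (x \in S) => //= h1 h2;
    first [by have := h1 isT | by have := h2 isT].
- by have := cardsUI W S; rewrite E0 cards0 addn0.
Qed.

Definition Ufree (V : finType) (adj : rel V) (v : V) (W : {set V}) : {set V} :=
  [set u in nbhd adj v | nofree adj u W].
Definition Yv (V : finType) (adj : rel V) (v : V) (I : {set V}) : nat :=
  #|Ufree adj v (I :\: nbhd adj v)|.

Lemma nofree_sub (V : finType) (adj : rel V) (v : V) (I : {set V}) :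
  nofree adj v I = (I \subset ~: nbhd adj v).
Proof.
apply/nofreeP/fintype.subsetP => H y yI.
  by rewrite !inE; apply: H.
by have := H y yI; rewrite !inE.
Qed.

Lemma expR_pow (R : realType) (lam : R) (k : nat) : 0 < lam ->
  expR (- (ln (1 + lam) * k%:R)) = ((1 + lam) ^+ k)^-1.
Proof.
move=> hl; rewrite mulrC expRN expRM_natl lnK // posrE; lra.
Qed.

Lemma step2 (R : realType) (V : finType) (adj : rel V) (lam : R) (v : V) :
  simple_graph adj -> 0 < lam ->
  \sum_(I : {set V} | independent adj I)
     expR (- (ln (1 + lam) * (Yv adj v I)%:R)) * lam ^+ #|I| <= QQ adj lam v.
Proof.
move=> sg hl.
set N := nbhd adj v.
rewrite big_mkcond (decomp N) /=.
have -> : QQ adj lam v =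
    \sum_(W : {set V} | W \subset ~: N) (if independent adj W then lam ^+ #|W| else 0).
  rewrite /QQ (eq_bigl (fun I : {set V} => (I \subset ~: N) && independent adj I)); last first.
    by move=> I; rewrite andbC nofree_sub.
  by rewrite big_mkcondr.
apply: ler_sum => W WN.
case: (boolP (independent adj W)) => iW; last first.
  rewrite big1 // => S SN; rewrite ifF //; apply/negbTE; apply: contra iW.
  by apply: indep_sub; apply: finset.subsetUl.
set u := Ufree adj v W.
have uN : u \subset N by apply/fintype.subsetP => y; rewrite inE => /andP[].
have hl1 : 0 < 1 + lam by lra.
apply: (@le_trans _ _ (\sum_(S : {set V} | S \subset N)
    (if S \subset u then ((1 + lam) ^+ #|u|)^-1 * lam ^+ #|W| * lam ^+ #|S| else 0))).
  apply: ler_sum => S SN.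
  have [E1 E2 E3] := WS_facts WN SN.
  rewrite /Yv -/N E1 -/u.
  case: ifP => iWS.
    have Su : S \subset u.
      apply/fintype.subsetP => y yS; rewrite inE (fintype.subsetP SN y yS) /=.
      apply/nofreeP => z zW; move/indepP: iWS => H.
      by apply: H; rewrite finset.in_setU ?yS ?zW ?orbT.
    by rewrite Su expR_pow // E3 exprD mulrA.
  case: ifP => _ //.
  by rewrite !mulr_ge0 ?invr_ge0 ?exprn_ge0 // ltW.
rewrite -big_mkcondr.
rewrite (eq_bigl (fun S : {set V} => S \subset u)); last first.
  move=> S; apply/andP/idP => [[] //|Su]; split => //; exact: fintype.subset_trans Su uN.
rewrite -big_distrr /= sum_subset_pow mulrAC mulVf ?mul1r //.
by apply: lt0r_neq0; apply: exprn_gt0.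
Qed.

Lemma sum_count (R : realType) (T V : finType) (A : {set T}) (C : T -> {set V} -> bool)
  (P : pred {set V}) (F : {set V} -> R) :
  \sum_(u in A) \sum_(I | P I && C u I) F I =
  \sum_(I | P I) #|[set u in A | C u I]|%:R * F I.
Proof.
under eq_bigr do rewrite big_mkcondr.
rewrite exchange_big /=; apply: eq_bigr => I _.
rewrite -big_mkcondr /= (eq_bigl (fun i => i \in [set u in A | C u I])); last first.
  by move=> u; rewrite !inE.
by rewrite sumr_const mulr_natl.
Qed.

Definition Pset (V : finType) (adj : rel V) (v : V) : {set V * V} :=
  [set p : V * V | [&& adj v p.1, adj v p.2 & adj p.1 p.2]]%SET.
Lemma nbhd_edgesE (R : realType) (V : finType) (adj : rel V) (v : V) :
  nbhd_edges R adj v = #|Pset adj v|%:R / 2.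
Proof.
rewrite /nbhd_edges; congr (_%:R / 2); apply: eq_card => p.
rewrite finset.inE.
by apply/idP/idP => h; [move: h|]; rewrite in_setE.
Qed.

Lemma step3I (V : finType) (adj : rel V) (v : V) (I : {set V}) :
  (Yv adj v I <= #|[set u in nbhd adj v | nofree adj u I]|
               + #|[set p in Pset adj v | p.2 \in I]|)%N.
Proof.
rewrite /Yv.
set N := nbhd adj v.
set A := Ufree adj v (I :\: N).
set B := [set u in N | nofree adj u I].
set Ps := [set p in Pset adj v | p.2 \in I].
have H : A \subset B :|: [set p.1 | p in Ps].
  apply/fintype.subsetP => u; rewrite inE => /andP [uN hfree].
  case: (boolP (nofree adj u I)) => hI.
    by rewrite finset.in_setU inE uN hI.
  move: hI; rewrite /nofree negbK => /exists_inP [y yI uy].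
  have yN : y \in N.
    case: (boolP (y \in N)) => yN //.
    have := (elimT (nofreeP _ _ _) hfree) y.
    by rewrite finset.in_setD yN yI uy => /(_ isT).
  rewrite finset.in_setU; apply/orP; right; apply/imsetP; exists (u, y) => //.
  move: uN yN; rewrite !inE /= => -> -> /=; by rewrite uy yI.
apply: (leq_trans (subset_leq_card H)); apply: (leq_trans (leq_card_setU _ _)).
by rewrite leq_add2l; exact: leq_imset_card.
Qed.

Lemma step3 (R : realType) (V : finType) (adj : rel V) (lam : R) (v : V) :
  0 < lam ->
  \sum_(I : {set V} | independent adj I) (Yv adj v I)%:R * lam ^+ #|I| <=
  \sum_(u in nbhd adj v) QQ adj lam u + \sum_(p in Pset adj v) PP adj lam p.2.
Proof.
move=> hl.
rewrite /QQ /PP.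
rewrite (sum_count (nbhd adj v) (fun u I => nofree adj u I)).
rewrite (sum_count (Pset adj v) (fun p I => p.2 \in I)).
rewrite -big_split /=; apply: ler_sum => I _.
rewrite -mulrDl -natrD; apply: ler_wpM2r; first by rewrite exprn_ge0 // ltW.
by rewrite ler_nat; apply: step3I.
Qed.

Lemma jensen (R : realType) (T1 T2 : finType) (P : pred T2) (w y : T1 -> T2 -> R) (c : R) :
  (forall i j, P j -> 0 <= w i j) -> 0 < \sum_i \sum_(j | P j) w i j ->
  (\sum_i \sum_(j | P j) w i j) *
    expR (- (c * ((\sum_i \sum_(j | P j) y i j * w i j) / (\sum_i \sum_(j | P j) w i j))))
  <= \sum_i \sum_(j | P j) expR (- (c * y i j)) * w i j.
Proof.
move=> w0 S0.
set S := \sum_i \sum_(j | P j) w i j.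
set Y := \sum_i \sum_(j | P j) y i j * w i j.
set m := Y / S.
set e := expR (- (c * m)).
have key : forall i j, P j -> e * (1 + c * m - c * y i j) * w i j <= expR (- (c * y i j)) * w i j.
  move=> i j Pj; apply: ler_wpM2r; first exact: w0.
  have -> : expR (- (c * y i j)) = e * expR (c * m - c * y i j).
    by rewrite /e -expRD; congr expR; ring.
  rewrite -addrA; apply: ler_wpM2l; first exact: expR_ge0.
  exact: expR_ge1Dx.
apply: le_trans (ler_sum _ (fun i _ => ler_sum _ (fun j Pj => key i j Pj))).
have E : \sum_i \sum_(j | P j) e * (1 + c * m - c * y i j) * w i j = e * (1 + c * m) * S - e * c * Y.
  rewrite /S /Y mulr_sumr [X in _ - X]mulr_sumr -sumrB; apply: eq_bigr => i _.
  rewrite !mulr_sumr -sumrB; apply: eq_bigr => j _; ring.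
rewrite E.
have -> : e * (1 + c * m) * S - e * c * Y = S * e.
  rewrite /m; field; exact: lt0r_neq0.
done.
Qed.

Lemma indep0 (V : finType) (adj : rel V) : independent adj finset.set0.
Proof. by apply/indepP => x y; rewrite finset.in_set0. Qed.

Lemma Z_pos (R : realType) (V : finType) (adj : rel V) (lam : R) :
  0 < lam -> 0 < hc_Z adj lam.
Proof.
move=> hl; rewrite /hc_Z (bigD1 finset.set0) ?indep0 //= cards0 expr0.
have : 0 <= \sum_(I | independent adj I && (I != finset.set0)) lam ^+ #|I|.
  by apply: sumr_ge0 => I _; rewrite exprn_ge0 // ltW.
lra.
Qed.

Lemma QQ_le_Z (R : realType) (V : finType) (adj : rel V) (lam : R) (v : V) :
  0 < lam -> QQ adj lam v <= hc_Z adj lam.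
Proof.
move=> hl; rewrite /QQ /hc_Z big_mkcondr /=; apply: ler_sum => I _.
by case: ifP => _ //; rewrite exprn_ge0 // ltW.
Qed.

Lemma PP_ge0 (R : realType) (V : finType) (adj : rel V) (lam : R) (v : V) :
  0 < lam -> 0 <= PP adj lam v.
Proof. by move=> hl; apply: sumr_ge0 => I _; rewrite exprn_ge0 // ltW. Qed.

Lemma PP_le (R : realType) (V : finType) (adj : rel V) (lam : R) (v : V) :
  simple_graph adj -> 0 < lam ->
  PP adj lam v <= lam / (1 + lam) * hc_Z adj lam.
Proof.
move=> sg hl.
have h := PQ lam v sg.
have hq := QQ_le_Z adj v hl.
have hl1 : 0 < 1 + lam by lra.
rewrite -subr_ge0.
have -> : lam / (1 + lam) * hc_Z adj lam - PP adj lam v =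
          (lam * hc_Z adj lam - (1 + lam) * PP adj lam v) / (1 + lam).
  field; exact: lt0r_neq0.
apply: divr_ge0; last exact: ltW.
rewrite h subr_ge0; apply: ler_wpM2l => //; exact: ltW.
Qed.

Lemma sumPP (R : realType) (V : finType) (adj : rel V) (lam : R) :
  \sum_v PP adj lam v = \sum_(I : {set V} | independent adj I) #|I|%:R * lam ^+ #|I|.
Proof.
transitivity (\sum_(v in [set: V]%SET) PP adj lam v).
  by apply: eq_bigl => v; rewrite finset.in_setT.
rewrite /PP (sum_count [set: V]%SET (fun v I => v \in I)).
apply: eq_bigr => I _; congr (_%:R * _); apply: eq_card => v; by rewrite !inE.
Qed.

Lemma degree_bound (R : realType) (V : finType) (adj : rel V) (lam : R) (D : nat) :
  simple_graph adj -> 0 < lam -> (forall u, (#|nbhd adj u| <= D)%N) ->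
  \sum_v \sum_(u in nbhd adj v) PP adj lam u <= D%:R * \sum_u PP adj lam u.
Proof.
move=> [sym irr] hl hD.
rewrite (exchange_big_dep predT) //= mulr_sumr; apply: ler_sum => u _.
rewrite (eq_bigl (fun v => v \in nbhd adj u)); last by move=> v; rewrite !inE sym.
rewrite sumr_const -[PP adj lam u *+ _]mulr_natl; apply: ler_wpM2r; first exact: PP_ge0.
by rewrite ler_nat.
Qed.

Lemma graph_bounds (R : realType) (V : finType) (adj : rel V) (lam f : R) (D : nat) :
  simple_graph adj -> 0 < lam -> max_degree adj = D -> (0 < #|V|)%N -> 0 < f ->
  (forall v, nbhd_edges R adj v <= D%:R ^+ 2 / f) ->
  exists ybar : R,
    lam / (1 + lam) * expR (- (ln (1 + lam) * ybar))
      <= hc_expected_size adj lam / #|V|%:R /\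
    lam / (1 + lam) * (ybar - 2 * (lam / (1 + lam)) * D%:R ^+ 2 / f)
      <= D%:R * (hc_expected_size adj lam / #|V|%:R).
Proof.
move=> sg hl hD hV hf hE.
have hl1 : 0 < 1 + lam by lra.
have Zp : 0 < hc_Z adj lam := Z_pos adj hl.
have np : 0 < (#|V|%:R : R) by rewrite ltr0n.
set Z := hc_Z adj lam.
set n : R := #|V|%:R.
set T := \sum_(I : {set V} | independent adj I) #|I|%:R * lam ^+ #|I|.
have hexp : hc_expected_size adj lam = T / Z by [].
rewrite hexp.
set A := \sum_v \sum_(I : {set V} | independent adj I) (Yv adj v I)%:R * lam ^+ #|I|.
exists (A / (n * Z)).
have sumPPT : \sum_v PP adj lam v = T := sumPP adj lam.
have wge0 : forall (v : V) (I : {set V}), independent adj I -> 0 <= lam ^+ #|I|.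
  by move=> v I _; rewrite exprn_ge0 // ltW.
have SZ : \sum_(v : V) \sum_(I : {set V} | independent adj I) lam ^+ #|I| = n * Z.
  transitivity (\sum_(v : V) Z); first by apply: eq_bigr.
  by rewrite sumr_const -mulr_natl.
have J := @jensen R V {set V} (independent adj) (fun (v : V) (I : {set V}) => lam ^+ #|I|)
                 (fun v I => (Yv adj v I)%:R) (ln (1 + lam)) wge0.
rewrite SZ -/A in J.
have := J (mulr_gt0 np Zp) => {}J.
have S2 : \sum_v \sum_(I : {set V} | independent adj I)
     expR (- (ln (1 + lam) * (Yv adj v I)%:R)) * lam ^+ #|I| <= \sum_v QQ adj lam v.
  by apply: ler_sum => v _; apply: step2.
have S1 : (1 + lam) * T = lam * \sum_v QQ adj lam v.
  rewrite -sumPPT !mulr_sumr; apply: eq_bigr => v _; exact: PQ.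
split.
  set e := expR _ in J *.
  have key : lam * (n * Z * e) <= (1 + lam) * T.
    rewrite S1; apply: ler_wpM2l; [exact: ltW | exact: le_trans J S2].
  rewrite -subr_ge0.
  have -> : T / Z / n - lam / (1 + lam) * e = ((1 + lam) * T - lam * (n * Z * e)) / ((1 + lam) * Z * n).
    by field; rewrite ?lt0r_neq0.
  apply: divr_ge0; first by rewrite subr_ge0.
  by rewrite !mulr_ge0 // ltW.
have hdeg : forall u, (#|nbhd adj u| <= D)%N.
  by move=> u; rewrite -hD; exact: (@leq_bigmax V (fun v => #|nbhd adj v|) u).
have D1 := degree_bound sg hl hdeg.
rewrite sumPPT in D1.
have E2 : (1 + lam) * \sum_v \sum_(u in nbhd adj v) PP adj lam u =
          lam * \sum_v \sum_(u in nbhd adj v) QQ adj lam u.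
  rewrite !mulr_sumr; apply: eq_bigr => v _; rewrite !mulr_sumr; apply: eq_bigr => u _.
  exact: PQ.
have E3 : forall v, \sum_(p in Pset adj v) PP adj lam p.2 <=
                    2 * D%:R ^+ 2 / f * (lam / (1 + lam) * Z).
  move=> v.
  apply: (@le_trans _ _ (\sum_(p in Pset adj v) (lam / (1 + lam) * Z))).
    by apply: ler_sum => p _; apply: PP_le.
  rewrite sumr_const -[_ *+ #|_|]mulr_natl; apply: ler_wpM2r.
    by rewrite mulr_ge0 // ?divr_ge0 // ltW.
  have := hE v; rewrite nbhd_edgesE => h.
  have -> : (#|Pset adj v|%:R : R) = 2 * (#|Pset adj v|%:R / 2) by field.
  rewrite (_ : 2 * D%:R ^+ 2 / f = 2 * (D%:R ^+ 2 / f)); last by rewrite mulrA.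
  by apply: ler_wpM2l => //; exact: h.
have E4 : A - n * (2 * D%:R ^+ 2 / f * (lam / (1 + lam) * Z)) <=
          \sum_v \sum_(u in nbhd adj v) QQ adj lam u.
  have -> : n * (2 * D%:R ^+ 2 / f * (lam / (1 + lam) * Z)) =
            \sum_(v : V) (2 * D%:R ^+ 2 / f * (lam / (1 + lam) * Z)).
    by rewrite sumr_const -[_ *+ #|_|]mulr_natl.
  rewrite /A -sumrB; apply: ler_sum => v _.
  rewrite lerBlDr; apply: le_trans (step3 adj v hl) _.
  by rewrite lerD2l.
have key : lam * (A - n * (2 * D%:R ^+ 2 / f * (lam / (1 + lam) * Z))) <= D%:R * (1 + lam) * T.
  apply: (@le_trans _ _ (lam * \sum_v \sum_(u in nbhd adj v) QQ adj lam u)).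
    by apply: ler_wpM2l => //; exact: ltW.
  rewrite -E2 (mulrC D%:R) -mulrA; apply: ler_wpM2l; first exact: ltW.
  exact: D1.
rewrite -subr_ge0.
have -> : D%:R * (T / Z / n) - lam / (1 + lam) * (A / (n * Z) - 2 * (lam / (1 + lam)) * D%:R ^+ 2 / f)
   = (D%:R * (1 + lam) * T - lam * (A - n * (2 * D%:R ^+ 2 / f * (lam / (1 + lam) * Z)))) / ((1 + lam) * Z * n).
  by field; rewrite ?lt0r_neq0 // gt_eqF.
apply: divr_ge0; first by rewrite subr_ge0.
by rewrite !mulr_ge0 // ltW.
Qed.

Lemma final_ineq (R : realType) (al K L D f w ybar : R) :
  0 < K -> 0 < L -> 0 < D -> 0 < f -> 0 < w -> w * expR w = D * L ->
  2 * (2 * K * L * D ^+ 2 / f) / w <= 1 ->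
  K * expR (- (L * ybar)) <= al ->
  K * (ybar - 2 * K * D ^+ 2 / f) <= D * al ->
  (1 + (expR (- (2 * (2 * K * L * D ^+ 2 / f) / w)) - 1)) * K * (w / (D * L)) <= al.
Proof.
move=> K0 L0 D0 f0 w0 hw.
set c := 2 * K * L * D ^+ 2 / f.
set d := 2 * c / w.
move=> hd h1 h2.
have c0 : 0 <= c by rewrite /c !mulr_ge0 ?ltW ?invr_gt0 // ?exprn_ge0 // ltW.
have d0 : 0 <= d by rewrite /d !mulr_ge0 ?ltW ?invr_gt0 //.
have wd : w * d = 2 * c by rewrite /d; field; rewrite lt0r_neq0.
have -> : 1 + (expR (- d) - 1) = expR (- d) by ring.
set z := L * ybar.
have H2 : K * (z - c) <= D * L * al.
  have -> : K * (z - c) = L * (K * (ybar - 2 * K * D ^+ 2 / f)).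
    by rewrite /z /c; field; rewrite lt0r_neq0.
  rewrite (mulrC D) -[L * D * al]mulrA; apply: ler_wpM2l => //; exact: ltW.
have DL0 : 0 < D * L by rewrite mulr_gt0.
case: (lerP z (w + d)) => hz.
  have -> : w / (D * L) = expR (- w).
    by rewrite -hw expRN; field; rewrite (lt0r_neq0 w0) (lt0r_neq0 (expR_gt0 w)).
  apply: le_trans _ h1.
  have -> : expR (- d) * K * expR (- w) = K * (expR (- d) * expR (- w)) by ring.
  apply: ler_wpM2l; first exact: ltW.
  rewrite -expRD ler_expR -/z; lra.
have e1 : w * expR (- d) <= w + d - c.
  have hd1 : 1 + d <= expR d := expR_ge1Dx d.
  apply: (@le_trans _ _ (w / (1 + d))).
    rewrite expRN; apply: ler_wpM2l; first exact: ltW.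
    by rewrite lef_pV2 // posrE ?expR_gt0 //; lra.
  rewrite ler_pdivrMr; last lra.
  nra.
have -> : expR (- d) * K * (w / (D * L)) = (K * (w * expR (- d))) / (D * L).
  by field; rewrite ?(lt0r_neq0 D0) ?(lt0r_neq0 L0) ?(lt0r_neq0 DL0).
rewrite ler_pdivrMr // (mulrC al).
apply: le_trans H2.
apply: ler_wpM2l; first exact: ltW.
apply: le_trans e1 _; lra.
Qed.

Lemma lambertW_spec (R : realType) (a : R) :
  0 < a -> 0 < lambertW a /\ lambertW a * expR (lambertW a) = a.
Proof.
move=> a0.
have ex : exists w : R, -1 <= w /\ w * expR w = a.
  have cf : continuous (fun w : R => w * expR w).
    by move=> y; apply: cvgM; [exact: cvg_id | exact: continuous_expR].
  have bnd : Num.min ((fun w : R => w * expR w) 0) ((fun w : R => w * expR w) a) <= a <=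
             Num.max ((fun w : R => w * expR w) 0) ((fun w : R => w * expR w) a).
    rewrite /= mul0r.
    have hx : a <= a * expR a.
      rewrite -{1}(mulr1 a); apply: ler_wpM2l; first exact: ltW.
      by rewrite -expR0 ler_expR ltW.
    have hx' : 0 <= a * expR a by rewrite mulr_ge0 // ltW.
    rewrite ge_min le_max.
    by apply/andP; split; apply/orP; [left; exact: ltW | right].
  have [c c01 hc] := IVT (ltW a0) (continuous_subspaceT cf) bnd.
  exists c; split => //.
  move: c01; rewrite in_itv /= => /andP [c0 _]; lra.
have [h1 h2] := xgetPex 0 ex.
rewrite /lambertW; split => //.
move: h2; set w := xget _ _ => h2.
rewrite -(pmulr_lgt0 _ (expR_gt0 w)) h2 //.
Qed.

Lemma K_le_L (R : realType) (lam : R) : 0 < lam -> lam / (1 + lam) <= ln (1 + lam).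
Proof.
move=> hl.
have h := expR_ge1Dx (- ln (1 + lam)).
rewrite expRN lnK ?posrE in h; last lra.
have hl1 : 0 < 1 + lam by lra.
have -> : lam / (1 + lam) = 1 - (1 + lam)^-1 by field; rewrite lt0r_neq0.
lra.
Qed.

Lemma hc_expected_ge0 (R : realType) (V : finType) (adj : rel V) (lam : R) :
  0 < lam -> 0 <= hc_expected_size adj lam.
Proof.
move=> hl; rewrite /hc_expected_size; apply: divr_ge0.
  by apply: sumr_ge0 => I _; rewrite mulr_ge0 ?exprn_ge0 // ltW.
exact: ltW (Z_pos adj hl).
Qed.

Unset Implicit Arguments.

Theorem theorem2p1 (R : realType) (Delta : R -> nat) (lam : R -> R)
  (hDelta : forall f, (0 < Delta f)%N)
  (hlam : forall f, 0 < lam f)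
  (hlim1 : (fun f => (Delta f)%:R * ln (1 + lam f)) x @[x --> +oo] --> +oo)
  (hlim2 : (fun f => 2 * ((Delta f)%:R * ln (1 + lam f)) ^+ 2
                     / (f * lambertW ((Delta f)%:R * ln (1 + lam f))))
             x @[x --> +oo] --> 0) :
  exists delta : R -> R,
    delta x @[x --> +oo] --> 0 /\
    forall f : R, f <= (Delta f)%:R ^+ 2 + 1 ->
    forall (V : finType) (adj : rel V),
      simple_graph adj ->
      max_degree adj = Delta f ->
      (forall v, nbhd_edges R adj v <= (Delta f)%:R ^+ 2 / f) ->
      hc_expected_size adj (lam f) / (#|V|)%:R >=
        (1 + delta f) * (lam f / (1 + lam f)) *
        (lambertW ((Delta f)%:R * ln (1 + lam f)) / ((Delta f)%:R * ln (1 + lam f))).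
Proof.
pose L := fun f => ln (1 + lam f).
pose K := fun f => lam f / (1 + lam f).
pose D := fun f => ((Delta f)%:R : R).
pose x := fun f => D f * L f.
pose w := fun f => lambertW (x f).
pose d := fun f => 2 * (2 * K f * L f * D f ^+ 2 / f) / w f.
have Lpos : forall f, 0 < L f.
  by move=> f; apply: ln_gt0; have := hlam f; lra.
have Kpos : forall f, 0 < K f.
  by move=> f; apply: divr_gt0 => //; have := hlam f; lra.
have KL : forall f, K f <= L f by move=> f; apply: K_le_L.
have Dpos : forall f, 0 < D f by move=> f; rewrite ltr0n.
have xpos : forall f, 0 < x f by move=> f; apply: mulr_gt0.
have wspec : forall f, 0 < w f /\ w f * expR (w f) = x f.
  by move=> f; apply: lambertW_spec.
exists (fun f => if (0 < f) && (d f <= 1) then expR (- d f) - 1 else -1).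
split.
  apply/cvgrPdist_lt => e e0.
  move/cvgrPdist_lt: hlim2 => h2.
  near=> f.
  have f0 : 0 < f by near: f; exists 0; split => //= y; done.
  have g1 : `|0 - 2 * x f ^+ 2 / (f * w f)| < e / 4.
    by near: f; apply: h2; lra.
  have g2 : `|0 - 2 * x f ^+ 2 / (f * w f)| < 1 / 4.
    by near: f; apply: h2; lra.
  have [w0 _] := wspec f.
  have gle := ler_norm (2 * x f ^+ 2 / (f * w f)).
  rewrite sub0r normrN in g1 g2.
  have d0 : 0 <= d f.
    have := Kpos f; have := Lpos f; have := Dpos f => hD0 hL0 hK0.
    rewrite /d; apply: divr_ge0; last exact: ltW.
    apply: mulr_ge0 => //; apply: divr_ge0; last exact: ltW.
    apply: mulr_ge0; last exact: exprn_ge0 (ltW hD0).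
    apply: mulr_ge0; last exact: ltW.
    apply: mulr_ge0 => //; exact: ltW.
  have dg : d f <= 2 * (2 * x f ^+ 2 / (f * w f)).
    rewrite -subr_ge0.
    have -> : 2 * (2 * x f ^+ 2 / (f * w f)) - d f =
              4 * D f ^+ 2 * L f * (L f - K f) / (f * w f).
      by rewrite /d /x; field; rewrite ?(lt0r_neq0 f0) ?(lt0r_neq0 w0).
    apply: divr_ge0; last by rewrite ltW // mulr_gt0.
    have := Lpos f; have := Dpos f => hD0 hL0.
    apply: mulr_ge0; last by rewrite subr_ge0 KL.
    apply: mulr_ge0; last exact: ltW.
    apply: mulr_ge0 => //; exact: exprn_ge0 (ltW hD0).
  have d1 : d f <= 1 by lra.
  rewrite f0 d1 /=.
  have e1 := expR_ge1Dx (- d f).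
  have e2 : expR (- d f) <= 1 by rewrite -expR0 ler_expR; lra.
  rewrite sub0r normrN ler0_norm; last lra.
  lra.
move=> f hf V adj sg hD hE.
case: ifP => cond; last first.
  rewrite addrN mul0r mul0r; apply: divr_ge0; first exact: hc_expected_ge0.
  exact: ler0n.
move/andP: cond => [f0 d1].
have hV : (0 < #|V|)%N.
  case: (pickP (@predT V)) => [v _ | none]; first by apply/card_gt0P; exists v.
  have := hDelta f; rewrite -hD /max_degree big1 // => v _.
  by have := none v.
have [ybar [b1 b2]] := graph_bounds sg (hlam f) hD hV f0 hE.
have [w0 hw] := wspec f.
exact: (final_ineq (Kpos f) (Lpos f) (Dpos f) f0 w0 hw d1 b1 b2).
Unshelve. all: end_near.
Qed.
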